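(* Let $S=\{p_1,\dots,p_n\}\subset\mathbb{R}^d$ satisfy the sparsity and bounded doubling dimension assumptions, and let $W\in\mathbb{R}^{n\times n}$ be its Gaussian affinity matrix. Then there is a factor $\mathrm{polylog}(n)=(\log n)^{O(d_0)}$ such that for all $1\le i\le n$, $$\frac{1}{\mathrm{polylog}(n)}\,\frac{\|W\|_F^2}{n}\;\le\; C_i\;\le\;\mathrm{polylog}(n)\,\frac{\|W\|_F^2}{n},$$ where $C_i=\|W_{:,i}\|^2$ is the squared norm of the $i$-th column of $W$.
   Context: $W_{i,j}=\exp(-\|p_i-p_j\|^2/\sigma)$ with a fixed parameter $\sigma>0$ treated as a constant. Sparsity assumption: for all $i\ne j$, $\|p_i-p_j\|\ge 0.1\,\sigma/\log n$. Bounded doubling dimension assumption: there is a constant $d_0$ such that for every $r>0$ and $\epsilon>0$, any ball of radius $r$ contains at most $O((r/\epsilon)^{d_0})$ points of $S$ that are pairwise at distance at least $\epsilon$. $\|W\|_F$ is the Frobenius norm. *)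

(* Defs.v *)
From Stdlib Require Import Reals List.
Import ListNotations.
Open Scope R_scope.

(* A point of R^d is a function nat -> R; only coordinates 0..d-1 matter.
   A point set S = {p_1,...,p_n} is p : nat -> (nat -> R), indices 0..n-1. *)

Definition rsum (n : nat) (f : nat -> R) : R :=
  fold_right Rplus 0 (map f (seq 0 n)).

Definition sqdist (d : nat) (x y : nat -> R) : R :=
  rsum d (fun k => (x k - y k) ^ 2).

Definition edist (d : nat) (x y : nat -> R) : R := sqrt (sqdist d x y).

Definition Waff (sigma : R) (d : nat) (p : nat -> nat -> R) (i j : nat) : R :=
  exp (- sqdist d (p i) (p j) / sigma).

Definition col_sqnorm (sigma : R) (d n : nat) (p : nat -> nat -> R) (i : nat) : R :=
  rsum n (fun j => (Waff sigma d p j i) ^ 2).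

Definition frob_sq (sigma : R) (d n : nat) (p : nat -> nat -> R) : R :=
  rsum n (fun i => rsum n (fun j => (Waff sigma d p i j) ^ 2)).

Definition sparse (sigma : R) (d n : nat) (p : nat -> nat -> R) : Prop :=
  forall i j, (i < n)%nat -> (j < n)%nat -> i <> j ->
    edist d (p i) (p j) >= (1/10) * sigma / ln (INR n).

(* Bounded doubling dimension with exponent d0 and O-constant K:
   any ball of radius r contains at most K (r/eps)^d0 points of S that are
   pairwise at distance >= eps (for 0 < eps <= r). *)
Definition doubling (d0 K : R) (d n : nat) (p : nat -> nat -> R) : Prop :=
  forall (c : nat -> R) (r eps : R), 0 < eps -> eps <= r ->
  forall T : list nat, NoDup T ->
    (forall j, In j T -> (j < n)%nat /\ edist d c (p j) <= r) ->
    (forall j k, In j T -> In k T -> j <> k -> edist d (p j) (p k) >= eps) ->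
    INR (length T) <= K * Rpower (r / eps) d0.

(* Main.v *)
Require Import Defs.
From Stdlib Require Import Reals List Lra Lia.
Open Scope R_scope.

Definition lsum (l : list nat) (f : nat -> R) := fold_right Rplus 0 (map f l).

Lemma lsum_le l f g : (forall j, In j l -> f j <= g j) -> lsum l f <= lsum l g.
Proof. unfold lsum; induction l; simpl; intros H. lra.
 assert (f a <= g a) by (apply H; simpl; auto). assert (fold_right Rplus 0 (map f l) <= fold_right Rplus 0 (map g l)) by (apply IHl; intros; apply H; simpl; auto). lra. Qed.

Lemma lsum_ext l f g : (forall j, In j l -> f j = g j) -> lsum l f = lsum l g.
Proof. intros H; unfold lsum; f_equal; apply map_ext_in; auto. Qed.

Lemma lsum_nonneg l f : (forall j, In j l -> 0 <= f j) -> 0 <= lsum l f.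
Proof. unfold lsum; induction l; simpl; intros H. lra.
 assert (0 <= f a) by (apply H; simpl; auto). assert (0 <= fold_right Rplus 0 (map f l)) by (apply IHl; intros; apply H; simpl; auto). lra. Qed.

Lemma lsum_ge_term l f i : In i l -> (forall j, In j l -> 0 <= f j) -> f i <= lsum l f.
Proof. unfold lsum; induction l; simpl; intros Hi H. contradiction.
 destruct Hi as [<-|Hi].
 - assert (0 <= fold_right Rplus 0 (map f l)) by (apply (lsum_nonneg l f); auto). lra.
 - assert (0 <= f a) by (apply H; simpl; auto). assert (f i <= fold_right Rplus 0 (map f l)) by (apply IHl; [exact Hi| intros; apply H; simpl; auto]). lra. Qed.

Lemma lsum_ind l (b : nat -> bool) a : 0 <= a ->
  lsum l (fun j => if b j then 1 else a) <= INR (length (filter b l)) + a * INR (length l).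
Proof. intros Ha; induction l; unfold lsum in *. simpl; lra. cbn [filter map fold_right].
 destruct (b a0); cbn [length]; rewrite ?S_INR; lra. Qed.

Lemma lsum_const_bound l f c : (forall j, In j l -> f j <= c) -> lsum l f <= c * INR (length l).
Proof. induction l; intros H; unfold lsum in *. simpl; lra. cbn [map fold_right length].
 rewrite S_INR. assert (f a <= c) by (apply H; simpl; auto).
 assert (fold_right Rplus 0 (map f l) <= c * INR (length l)) by (apply IHl; intros; apply H; simpl; auto). lra. Qed.

Lemma lsum_const_ge l f c : (forall j, In j l -> c <= f j) -> c * INR (length l) <= lsum l f.
Proof. induction l; intros H; unfold lsum in *. simpl; lra. cbn [map fold_right length].
 rewrite S_INR. assert (c <= f a) by (apply H; simpl; auto).
 assert (c * INR (length l) <= fold_right Rplus 0 (map f l)) by (apply IHl; intros; apply H; simpl; auto). lra. Qed.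

Lemma exp_le x y : x <= y -> exp x <= exp y.
Proof. intros [H|H]. left; apply exp_increasing; auto. subst; lra. Qed.

Lemma sqdist_nonneg d x y : 0 <= sqdist d x y.
Proof. unfold sqdist, rsum. apply (lsum_nonneg _ (fun k => (x k - y k)^2)). intros; apply pow2_ge_0. Qed.

Lemma sqdist_sym d x y : sqdist d x y = sqdist d y x.
Proof. unfold sqdist, rsum. apply (lsum_ext _ (fun k => (x k - y k)^2) (fun k => (y k - x k)^2)). intros; ring. Qed.

Lemma Waff_sym s d p i j : Waff s d p i j = Waff s d p j i.
Proof. unfold Waff; rewrite sqdist_sym; auto. Qed.

Lemma Waff_bounds s d p i j : 0 < s -> 0 < Waff s d p i j <= 1.
Proof. intros Hs; unfold Waff; split. apply exp_pos.
 rewrite <- exp_0. apply exp_le. pose proof (sqdist_nonneg d (p i) (p j)).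
 unfold Rdiv. assert (0 <= sqdist d (p i) (p j) * / s) by (apply Rmult_le_pos; [lra| left; apply Rinv_0_lt_compat; lra]). lra. Qed.

Lemma Waff_ii s d p i : Waff s d p i i = 1.
Proof. unfold Waff, sqdist, rsum.
 replace (fold_right Rplus 0 (map (fun k => (p i k - p i k)^2) (seq 0 d))) with 0.
 - unfold Rdiv; rewrite Ropp_0, Rmult_0_l; apply exp_0.
 - apply Rle_antisym.
   + apply (lsum_nonneg _ (fun k => (p i k - p i k)^2)); intros; apply pow2_ge_0.
   + eapply Rle_trans. apply (lsum_const_bound _ (fun k => (p i k - p i k)^2) 0). intros; simpl; lra. lra. Qed.

Lemma row_bound sigma d0 K d n p i : 0 < sigma -> (2 <= n)%nat ->
  sparse sigma d n p -> doubling d0 K d n p -> (i < n)%nat ->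
  let L := ln (INR n) in
  let eps := (1/10) * sigma / L in
  let r := (sigma/2+1)*(L+1) + eps in
  lsum (seq 0 n) (fun j => Waff sigma d p i j ^ 2) <= 1 + K * Rpower (r / eps) d0.
Proof.
  intros Hs Hn Hsp Hdb Hi L eps r.
  assert (Hn1 : 1 < INR n) by (apply (lt_INR 1); lia).
  assert (HL : 0 < L) by (unfold L; rewrite <- ln_1; apply ln_increasing; lra).
  assert (Heps : 0 < eps) by (unfold eps; unfold Rdiv; apply Rmult_lt_0_compat; [lra| apply Rinv_0_lt_compat; lra]).
  assert (HR : 0 <= (sigma/2+1)*(L+1)) by (apply Rmult_le_pos; lra).
  assert (Hr : eps <= r) by (unfold r; lra).
  set (b := fun j => if Rle_dec (edist d (p i) (p j)) r then true else false).
  set (T := filter b (seq 0 n)).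
  assert (HT : INR (length T) <= K * Rpower (r / eps) d0).
  { apply (Hdb (p i) r eps Heps Hr T).
    - apply NoDup_filter, seq_NoDup.
    - intros j Hj. unfold T in Hj. apply filter_In in Hj as [Hj Hb].
      apply in_seq in Hj. split. lia. unfold b in Hb. destruct Rle_dec; [auto|discriminate].
    - intros j k Hj Hk Hjk. unfold T in Hj, Hk. apply filter_In in Hj as [Hj _]. apply filter_In in Hk as [Hk _].
      apply in_seq in Hj, Hk. apply Hsp; auto; lia. }
  eapply Rle_trans.
  { apply (lsum_le _ _ (fun j => if b j then 1 else / INR n)).
    intros j Hj. unfold b. destruct Rle_dec as [Hle|Hgt].
    - destruct (Waff_bounds sigma d p i j Hs). nra.
    - apply Rnot_le_gt in Hgt.
      pose proof (sqdist_nonneg d (p i) (p j)) as Hq.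
      pose proof (sqrt_sqrt _ Hq) as Hsq. unfold edist in Hgt.
      set (e := sqrt (sqdist d (p i) (p j))) in *.
      assert (Hrr : r * r <= sqdist d (p i) (p j)) by nra.
      assert (HRR : sigma * L / 2 <= r * r).
      { unfold r. assert (sigma/2 <= (sigma/2+1)*(L+1)) by nra.
        assert (L <= (sigma/2+1)*(L+1)) by nra. nra. }
      unfold Waff. rewrite <- (exp_ln (INR n)) by lra. rewrite <- exp_Ropp.
      replace (exp (- sqdist d (p i) (p j) / sigma) ^ 2) with (exp (- sqdist d (p i) (p j) / sigma + - sqdist d (p i) (p j) / sigma)) by (rewrite exp_plus; ring).
      apply exp_le. fold L.
      assert (L <= 2 * (sqdist d (p i) (p j) / sigma)).
      { apply (Rmult_le_reg_r sigma); [lra|]. field_simplify; lra. }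
      unfold Rdiv in *. lra. }
  eapply Rle_trans. apply lsum_ind. left; apply Rinv_0_lt_compat; lra.
  rewrite length_seq. fold T. rewrite Rinv_l by lra. lra.
Qed.

Theorem corollary1 :
  exists B : R, 0 < B /\
  forall (sigma d0 K : R), 0 < sigma -> 0 <= d0 -> 0 < K ->
  exists A : R, 0 < A /\
  forall (d n : nat) (p : nat -> nat -> R),
    (2 <= n)%nat ->
    sparse sigma d n p ->
    doubling d0 K d n p ->
    forall i, (i < n)%nat ->
      (1 / (A * Rpower (ln (INR n)) (B * d0))) * (frob_sq sigma d n p / INR n)
        <= col_sqnorm sigma d n p i /\
      col_sqnorm sigma d n p i
        <= (A * Rpower (ln (INR n)) (B * d0)) * (frob_sq sigma d n p / INR n).
Proof.
  exists 2. split; [lra|].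
  intros sigma d0 K Hs Hd0 HK.
  set (l2 := ln 2).
  assert (Hl2 : 0 < l2) by (unfold l2; rewrite <- ln_1; apply ln_increasing; lra).
  set (c := 10*(sigma/2+1)/sigma * (1+1/l2) + 1/(l2*l2)).
  assert (Hc : 0 < c).
  { unfold c. assert (0 < 10*(sigma/2+1)/sigma) by (unfold Rdiv; apply Rmult_lt_0_compat; [lra|apply Rinv_0_lt_compat; lra]).
    assert (0 < 1/l2) by (unfold Rdiv; apply Rmult_lt_0_compat; [lra|apply Rinv_0_lt_compat; lra]).
    assert (0 < 1/(l2*l2)) by (unfold Rdiv; apply Rmult_lt_0_compat; [lra|apply Rinv_0_lt_compat; nra]). nra. }
  set (m := Rpower l2 (2*d0)).
  assert (Hm : 0 < m) by (unfold m, Rpower; apply exp_pos).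
  assert (HcK : 0 < K * Rpower c d0) by (apply Rmult_lt_0_compat; [lra| unfold Rpower; apply exp_pos]).
  exists (1/m + K * Rpower c d0). split.
  { assert (0 < 1/m) by (unfold Rdiv; apply Rmult_lt_0_compat; [lra|apply Rinv_0_lt_compat; lra]). lra. }
  intros d n p Hn Hsp Hdb i Hi.
  set (L := ln (INR n)).
  assert (Hn2 : 2 <= INR n) by (apply (le_INR 2); lia).
  assert (HlL : l2 <= L).
  { unfold l2, L. destruct Hn2 as [H|H]. left; apply ln_increasing; lra. rewrite H; lra. }
  assert (HL : 0 < L) by lra.
  set (X := Rpower L (2*d0)).
  assert (HX : m <= X) by (apply Rle_Rpower_l; lra).
  set (eps := (1/10) * sigma / L).
  set (r := (sigma/2+1)*(L+1) + eps).
  assert (Hre : r / eps <= c * (L*L)).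
  { assert (Heps : 0 < eps) by (unfold eps; unfold Rdiv; apply Rmult_lt_0_compat; [lra| apply Rinv_0_lt_compat; lra]).
    set (al := 10*(sigma/2+1)/sigma).
    assert (E : r / eps = al * L * (L+1) + 1) by (unfold r, eps, al; field; lra).
    rewrite E. unfold c. fold al.
    assert (Hal : 0 < al) by (unfold al, Rdiv; apply Rmult_lt_0_compat; [lra|apply Rinv_0_lt_compat; lra]).
    assert (H1 : 1 <= L/l2) by (apply (Rmult_le_reg_r l2); [lra|]; field_simplify; lra).
    assert (H2 : L + 1 <= (1+1/l2) * L) by (replace ((1+1/l2)*L) with (L + L/l2) by (field; lra); lra).
    assert (H3 : 1 <= 1/(l2*l2) * (L*L)) by (replace (1/(l2*l2)*(L*L)) with ((L/l2)*(L/l2)) by (field; lra); nra).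
    assert (al * L * (L+1) <= al * (1+1/l2) * (L*L)).
    { replace (al * (1+1/l2) * (L*L)) with (al * L * ((1+1/l2)*L)) by ring.
      apply Rmult_le_compat_l; [nra|lra]. }
    nra. }
  assert (Hpow : Rpower (r/eps) d0 <= Rpower c d0 * X).
  { assert (Heps : 0 < eps) by (unfold eps; unfold Rdiv; apply Rmult_lt_0_compat; [lra| apply Rinv_0_lt_compat; lra]).
    assert (0 < r/eps) by (unfold Rdiv; apply Rmult_lt_0_compat; [unfold r; nra| apply Rinv_0_lt_compat; lra]).
    eapply Rle_trans. apply Rle_Rpower_l; [lra| split; [lra|exact Hre]].
    rewrite <- Rpower_mult_distr by nra. unfold X.
    rewrite <- Rpower_mult. replace 2 with (INR 2) by (simpl; ring). rewrite Rpower_pow by lra.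
    simpl. rewrite Rmult_1_r. lra. }
  assert (Hrow : forall k, (k < n)%nat ->
     1 <= lsum (seq 0 n) (fun j => Waff sigma d p k j ^ 2) <= (1/m + K * Rpower c d0) * X).
  { intros k Hk. split.
    - replace 1 with (Waff sigma d p k k ^ 2) by (rewrite Waff_ii; ring).
      apply (lsum_ge_term _ (fun j => Waff sigma d p k j ^ 2)). apply in_seq; lia.
      intros; apply pow2_ge_0.
    - eapply Rle_trans. apply (row_bound sigma d0 K d n p k Hs Hn Hsp Hdb Hk).
      fold L eps r.
      assert (1 <= X / m) by (apply (Rmult_le_reg_r m); [lra|]; field_simplify; lra).
      replace ((1/m + K * Rpower c d0) * X) with (X/m + K * Rpower c d0 * X) by (field; lra).
      assert (K * Rpower (r/eps) d0 <= K * (Rpower c d0 * X)) by (apply Rmult_le_compat_l; lra).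
      lra. }
  assert (Hcol : col_sqnorm sigma d n p i = lsum (seq 0 n) (fun j => Waff sigma d p i j ^ 2)).
  { unfold col_sqnorm, rsum. apply (lsum_ext _ (fun j => Waff sigma d p j i ^ 2)). intros; rewrite Waff_sym; auto. }
  assert (Hf1 : INR n <= frob_sq sigma d n p).
  { unfold frob_sq, rsum. replace (INR n) with (1 * INR (length (seq 0 n))) by (rewrite length_seq; ring).
    apply (lsum_const_ge _ (fun k => rsum n (fun j => Waff sigma d p k j ^ 2))).
    intros k Hk; apply in_seq in Hk. apply Hrow; lia. }
  assert (Hf2 : frob_sq sigma d n p <= (1/m + K * Rpower c d0) * X * INR n).
  { unfold frob_sq, rsum. replace (INR n) with (INR (length (seq 0 n))) by (rewrite length_seq; ring).
    apply (lsum_const_bound _ (fun k => rsum n (fun j => Waff sigma d p k j ^ 2))).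
    intros k Hk; apply in_seq in Hk. apply Hrow; lia. }
  fold L. replace (2 * d0) with (2*d0) by ring. fold X.
  rewrite Hcol. destruct (Hrow i Hi) as [Ha Hb].
  set (P := (1/m + K * Rpower c d0) * X) in *.
  assert (HP : 0 < P) by lra.
  assert (Hn0 : 0 < INR n) by lra.
  split.
  - assert (frob_sq sigma d n p / INR n <= P) by (apply (Rmult_le_reg_r (INR n)); [lra|]; field_simplify; lra).
    assert (1 / P * (frob_sq sigma d n p / INR n) <= 1).
    { apply (Rmult_le_reg_l P); [lra|]. field_simplify; lra. }
    lra.
  - assert (1 <= frob_sq sigma d n p / INR n) by (apply (Rmult_le_reg_r (INR n)); [lra|]; field_simplify; lra).
    nra.
Qed.
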